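(* Let $G$ be a group with a finite symmetric generating set $X$, let $\phi:G\to G'$ be an epimorphism of groups, and take $X'=\phi(X)$ as generating set for $G'$. Then for all $n\ge0$, $\Gamma_{G,X}(n)\ge\Gamma_{G',X'}(n)$.
   Context: A word over a generating set is a geodesic if its length equals the word length of the element it represents; $\Gamma_{G,X}(n)$ is the number of geodesic words over $X$ of length at most $n$. *)

(* Defs.v *)
From mathcomp Require Import all_boot.
From mathcomp Require Import boolp.

Set Implicit Arguments.
Unset Strict Implicit.
Unset Printing Implicit Defensive.

Local Open Scope group_scope.

Section Words.
Variable G : groupType.

Definition evalw (w : seq G) : G := foldr (fun x y => x * y) 1 w.

Definition is_word (X : seq G) (w : seq G) : bool := all (fun x => x \in X) w.

(* X (finite, as a duplicate-free list) generates G as a monoid;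
   for symmetric X this is the same as generating G as a group *)
Definition generates (X : seq G) : Prop :=
  forall g : G, exists w, is_word X w /\ evalw w = g.

Definition symmetric_set (X : seq G) : Prop :=
  forall x, x \in X -> x^-1 \in X.

Definition geodesic (X : seq G) (w : seq G) : Prop :=
  is_word X w /\
  forall v, is_word X v -> evalw v = evalw w -> size w <= size v.

Fixpoint words (X : seq G) (k : nat) : seq (seq G) :=
  match k with
  | 0 => [:: [::]]
  | k.+1 => [seq x :: w | x <- X, w <- words X k]
  end.

Definition Gamma (X : seq G) (n : nat) : nat :=
  \sum_(k < n.+1) count (fun w => `[< geodesic X w >]) (words X k).

End Words.

(* Main.v *)
Require Import Defs.
From mathcomp Require Import all_boot.
From mathcomp Require Import boolp.

Set Implicit Arguments.
Unset Strict Implicit.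
Unset Printing Implicit Defensive.
Local Open Scope group_scope.

Lemma mem_words (G : groupType) (X : seq G) k w :
  (w \in words X k) = (is_word X w && (size w == k)).
Proof.
elim: k w => [|k IH] w /=.
  by case: w => [|x w]; rewrite ?andbF ?inE // ; case: (x :: w == [::]) /eqP.
apply/allpairsPdep/idP.
  by case=> x [v [xX vW ->]]; rewrite /is_word /= xX; move: vW; rewrite IH.
case: w => [//|x v] /andP [/= /andP [xX vX] /eqP [sv]].
by exists x, v; split=> //; rewrite IH vX sv eqxx.
Qed.

Lemma uniq_words (G : groupType) (X : seq G) k : uniq X -> uniq (words X k).
Proof.
move=> uX; elim: k => [//|k IH] /=.
apply: allpairs_uniq => //.
by move=> [a b] [c d] _ _ /= [-> ->].
Qed.

Lemma phi1 (G G' : groupType) (phi : {multiplicative G -> G'}) : phi 1 = 1.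
Proof.
have h : phi 1 = phi 1 * phi 1 by rewrite -gmulfM mulg1.
by rewrite -(mulVg (phi 1)) {3}h mulKg.
Qed.

Lemma phi_eval (G G' : groupType) (phi : {multiplicative G -> G'}) w :
  phi (evalw w) = evalw (map phi w).
Proof. by elim: w => [|x w IH] /=; [exact: phi1 | rewrite gmulfM IH]. Qed.

Theorem lemma2p6 (G G' : groupType) (X : seq G)
  (Xuniq : uniq X) (Xsym : symmetric_set X) (Xgen : generates X)
  (phi : {multiplicative G -> G'}) (phi_surj : forall g' : G', exists g, phi g = g')
  (n : nat) :
  Gamma (undup (map phi X)) n <= Gamma X n.
Proof.
rewrite /Gamma; apply: leq_sum => k _.
set X' := undup (map phi X).
pose l (y : G') := nth 1 X (index y (map phi X)).
have lX y : y \in X' -> (l y \in X) && (phi (l y) == y).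
  rewrite mem_undup => yX.
  have hi : index y (map phi X) < size X by rewrite -(size_map phi) index_mem.
  rewrite /l mem_nth //=; apply/eqP.
  by rewrite -(nth_map 1 (phi 1)) // nth_index.
pose L := map l.
have LK w : is_word X' w -> map phi (L w) = w.
  elim: w => [//|y w IH] /= /andP [yX wX].
  by case/andP: (lX y yX) => _ /eqP ->; rewrite IH.
have LW w : is_word X' w -> is_word X (L w).
  elim: w => [//|y w IH] /= /andP [yX wX].
  by case/andP: (lX y yX) => -> _; rewrite IH.
have mapW v : is_word X v -> is_word X' (map phi v).
  elim: v => [//|x v IH] /= /andP [xX vX].
  by rewrite IH // andbT mem_undup map_f.
rewrite -!size_filter.
set S' := filter (fun w => `[< geodesic X' w >]) (words X' k).
have uS' : uniq S' by apply: filter_uniq; apply: uniq_words; apply: undup_uniq.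
rewrite -(size_map L).
apply: uniq_leq_size.
  rewrite map_inj_in_uniq // => a b.
  rewrite !mem_filter !mem_words => /andP [_ /andP [aW _]] /andP [_ /andP [bW _]] e.
  by rewrite -(LK a aW) -(LK b bW) e.
move=> w /mapP [w' ]; rewrite mem_filter mem_words => /andP [g /andP [w'W /eqP sw']] ->.
move/asboolP: g => [_ g].
rewrite mem_filter mem_words LW // size_map sw' eqxx !andbT.
apply/asboolP; split; first exact: LW.
move=> v vW ev; rewrite size_map -(size_map phi v).
apply: g; first exact: mapW.
by rewrite -(phi_eval phi v) ev (phi_eval phi (L w')) (LK w' w'W).
Qed.
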